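(* Let $G$ be a finite group and let $p$ be a fixed prime divisor of $|G|$. Suppose that every maximal subgroup of $G$ is normal in $G$ or has order not divisible by $p$. Then for each prime divisor $q$ of $|G|$, $G$ is $q$-nilpotent or $q$-closed.
   Context: For a prime $q$, a finite group $G$ is $q$-nilpotent if it has a normal $q$-complement (a normal subgroup of order coprime to $q$ and index a power of $q$), and $q$-closed if its Sylow $q$-subgroup is normal in $G$. *)

(* Defs.v *)
From mathcomp Require Import all_boot all_fingroup all_solvable.
Set Implicit Arguments. Unset Strict Implicit. Unset Printing Implicit Defensive.
Local Open Scope group_scope.

Definition q_nilpotent (gT : finGroupType) (q : nat) (G : {set gT}) : Prop :=
  exists K : {group gT}, [/\ K <| G, coprime #|K| q & q.-nat #|G : K|].

Definition q_closed (gT : finGroupType) (q : nat) (G : {set gT}) : Prop :=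
  exists P : {group gT}, P \in 'Syl_q(G) /\ P <| G.

(* Main.v *)
Require Import Defs.
From mathcomp Require Import all_boot all_fingroup all_solvable.
Local Open Scope group_scope.

Lemma key (gT : finGroupType) (G : {group gT}) (p : nat) (P H R : {group gT}) (r : nat) :
  p %| #|P| ->
  (forall M : {group gT}, maximal M G -> M <| G \/ ~~ (p %| #|M|)) ->
  H \subset G -> P \subset H -> r.-Sylow(G) R -> R \subset H ->
  'N_G(R) \subset 'N(H) -> H <| G.
Proof.
move=> pP hyp sHG sPH sylR sRH nRH.
rewrite /normal sHG /=.
have [e | neq] := boolP ('N_G(H) == G); first by rewrite -{1}(eqP e) subsetIr.
have prN : 'N_G(H) \proper G by rewrite properEneq neq subsetIl.
have [M maxM sNM] := @maxgroup_exists _ (fun X : {group gT} => X \proper G) 'N_G(H)%G prN.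
have maxM' : maximal M G by [].
have prM : M \proper G := maxgroupp maxM.
have sHM : H \subset M.
  apply: subset_trans sNM; rewrite subsetI sHG; exact: normG.
have pM : p %| #|M|.
  apply: dvdn_trans pP _; apply: cardSg; exact: subset_trans sHM.
have nM : M <| G by case: (hyp M maxM') => // /negP.
have sylRM : r.-Sylow(M) R.
  apply: pHall_subl sylR => //; [exact: subset_trans sHM | exact: proper_sub].
have := Frattini_arg nM sylRM.
have sNRM : 'N_G(R) \subset M.
  apply: subset_trans sNM; rewrite subsetI subsetIl; exact: nRH.
rewrite mulGSid // => eMG.
by move: prM; rewrite eMG properE subxx.
Qed.

Theorem theorem1p10 (gT : finGroupType) (G : {group gT}) (p : nat) :
  prime p -> p %| #|G| ->
  (forall M : {group gT}, maximal M G -> M <| G \/ ~~ (p %| #|M|)) ->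
  forall q : nat, prime q -> q %| #|G| -> q_nilpotent q G \/ q_closed q G.
Proof.
move=> pr_p pG hyp q pr_q qG.
have [P sylP] := Sylow_exists p G.
have pP : p %| #|P|.
  rewrite (card_Hall sylP) p_part; apply: dvdn_exp (dvdnn p).
  by rewrite logn_gt0 mem_primes pr_p pG cardG_gt0.
have sPG := pHall_sub sylP.
have nPG : P <| G.
  have := @key gT G p P P P p pP hyp sPG (subxx P) sylP (subxx P).
  by rewrite subsetIr; apply.
have [eqp | neqp] := eqVneq q p.
  right; exists P; split => //; rewrite inE; by rewrite eqp.
left; exists 'O_q^'(G)%G; split.
- exact: pcore_normal.
- by apply: p'nat_coprime (pcore_pgroup _ _) (pnat_id pr_q).
- apply/pnatP; first by rewrite indexg_gt0.
  move=> r pr_r rdiv; apply/negPn/negP => rq.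
  have [R sylR] := Sylow_exists r G.
  have sRG := pHall_sub sylR.
  have nPR : R \subset 'N(P) by apply: subset_trans sRG (normal_norm nPG).
  have nH : (P <*> R)%G <| G.
    apply: (@key gT G p P (P <*> R)%G R r pP hyp).
    - by rewrite join_subG sPG.
    - exact: joing_subl.
    - exact: sylR.
    - exact: joing_subr.
    - apply: normsY; last exact: subsetIr.
      apply: subset_trans (subsetIl _ _) (normal_norm nPG).
  have qH : q^'.-group (P <*> R).
    rewrite /= norm_joinEr // pgroupM; apply/andP; split.
      have pgP : p.-group P := pHall_pgroup sylP.
      apply: pi_pgroup pgP _. rewrite !inE /=. by rewrite eq_sym.
    have pgR : r.-group R := pHall_pgroup sylR.
    apply: pi_pgroup pgR _. by rewrite !inE /=.
  have sRO : R \subset 'O_q^'(G).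
    apply: subset_trans (joing_subr P R) _; exact: pcore_max qH nH.
  have sylRO : r.-Sylow('O_q^'(G)) R by apply: pHall_subl sylR => //; exact: pcore_sub.
  move: (sylR) => /and3P [_ _ rG].
  have : r^'.-nat #|G : 'O_q^'(G)| by apply: pnat_dvd rG; exact: indexgS.
  move/pnatPpi => /(_ r); rewrite mem_primes pr_r indexg_gt0 rdiv => /(_ isT).
  by rewrite !inE /= eqxx.
Qed.
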